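(* For a pseudocompact (Tychonoff) space $X$, $X$ is a $C$-space if and only if $X$ is a finite $C$-space.
   Context: A set is functionally open if it is a cozero set. $X$ is a $C$-space if every sequence $\{\omega_n\}$ of locally finite covers of $X$ by functionally open sets has a $C$-refinement $\{\gamma_n\}$ (each $\gamma_n$ a disjoint family of open sets refining $\omega_n$, with $\bigcup_n\gamma_n$ covering $X$) such that $\bigcup_n\gamma_n$ is a locally finite cover of $X$ by functionally open sets. $X$ is a finite $C$-space if for every sequence $\{\omega_n\}$ of finite covers of $X$ by functionally open sets there exist $k$ and finite families $\gamma_1,\dots,\gamma_k$ of pairwise disjoint functionally open sets such that each $\gamma_n$ refines $\omega_n$ and $\bigcup_{n=1}^k\gamma_n$ covers $X$. *)

(* Defs.v *)
From mathcomp Require Import all_boot all_order all_algebra.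
From mathcomp Require Import all_classical all_reals all_analysis.
From mathcomp Require Import Rstruct Rstruct_topology.
From Stdlib Require Import Reals.
Set Implicit Arguments. Unset Strict Implicit. Unset Printing Implicit Defensive.
Import Order.TTheory GRing.Theory Num.Theory.
Local Open Scope classical_set_scope.
Local Open Scope ring_scope.

Section CSpaces.
Variable X : topologicalType.

Definition functionally_open (U : set X) : Prop :=
  exists f : X -> R, continuous f /\ U = [set x | f x != 0].

Definition tychonoff_space : Prop :=
  accessible_space X /\
  forall (a : X) (B : set X), closed B -> ~ B a ->
    exists f : X -> R, continuous f /\ f a = 0 /\ (forall b, B b -> f b = 1).

Definition pseudocompact : Prop :=
  forall f : X -> R, continuous f -> exists M : R, forall x, `|f x| <= M.

Definition covers (w : set (set X)) : Prop :=
  forall x, exists2 A, w A & A x.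

Definition loc_finite (w : set (set X)) : Prop :=
  forall x : X, exists2 U, nbhs x U & finite_set [set A | w A /\ A `&` U !=set0].

Definition refines (g w : set (set X)) : Prop :=
  forall G, g G -> exists2 W, w W & G `<=` W.

Definition disjoint_family (g : set (set X)) : Prop :=
  forall G H, g G -> g H -> G <> H -> G `&` H = set0.

Definition all_open (g : set (set X)) : Prop := forall G, g G -> open G.

Definition all_functionally_open (g : set (set X)) : Prop :=
  forall G, g G -> functionally_open G.

Definition C_space : Prop :=
  forall w : nat -> set (set X),
    (forall n, covers (w n) /\ loc_finite (w n) /\ all_functionally_open (w n)) ->
    exists g : nat -> set (set X),
      (forall n, disjoint_family (g n) /\ all_open (g n) /\ refines (g n) (w n)) /\
      covers (\bigcup_n g n) /\ loc_finite (\bigcup_n g n) /\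
      all_functionally_open (\bigcup_n g n).

(* finite C-space; indices shifted to start at 0: gamma_0,...,gamma_{k-1} *)
Definition finite_C_space : Prop :=
  forall w : nat -> set (set X),
    (forall n, covers (w n) /\ finite_set (w n) /\ all_functionally_open (w n)) ->
    exists (k : nat) (g : nat -> set (set X)),
      (forall n : nat, (n < k)%nat ->
         finite_set (g n) /\ disjoint_family (g n) /\
         all_functionally_open (g n) /\ refines (g n) (w n)) /\
      covers (\bigcup_(n in [set n : nat | (n < k)%nat]) g n).

End CSpaces.

(* Main.v *)
Require Import Defs.
From mathcomp Require Import all_boot all_order all_algebra.
From mathcomp Require Import all_classical all_reals all_analysis.
From mathcomp Require Import Rstruct Rstruct_topology.
From Stdlib Require Import Reals.
From mathcomp Require Import finmap.
From mathcomp Require Import lra.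
Import Order.TTheory GRing.Theory Num.Theory.
Local Open Scope classical_set_scope.
Local Open Scope ring_scope.

Lemma finite_nat_bounded (S : set nat) : finite_set S -> exists m : nat, forall i : nat, S i -> (i < m)%nat.
Proof.
move=> /finite_fsetP[s ->]; exists (\big[maxn/0%nat]_(j <- (finmap.enum_fset s)) j).+1 => i /= iS.
rewrite ltnS; exact: (@leq_bigmax_seq _ _ xpredT (fun j => j) i iS).
Qed.

Lemma sum_widen (hi : nat -> R) (a b : nat) : (a <= b)%nat ->
  (forall i, (a <= i)%nat -> hi i = 0) -> \sum_(i < a) hi i = \sum_(i < b) hi i.
Proof.
move=> ab h0; rewrite -(subnKC ab) big_split_ord /=.
rewrite [X in _ = _ + X]big1 ?addr0 // => i _; apply: h0; exact: leq_addr.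
Qed.

Lemma lf_finite {X : topologicalType} {w : set (set X)} :
  pseudocompact X -> loc_finite w -> all_functionally_open w ->
  finite_set [set A | w A /\ A !=set0].
Proof.
move=> pc lf fo; apply: contrapT => /infiniteP/pcard_leP/injfunPex[e eS einj].
have /choice[p hp] : forall i : nat, exists p : (X -> R) * X,
   continuous p.1 /\ e i = [set x | p.1 x != 0] /\ e i p.2.
  move=> i; have [/fo [f [cf ef]] [x ex]] := eS i I.
  by exists (f, x).
pose hi (i : nat) (x : X) : R := `|(p i).1 x| * (i%:R / `|(p i).1 (p i).2|).
have hi0 : forall i x, 0 <= hi i x.
  by move=> i x; rewrite /hi mulr_ge0 ?divr_ge0 ?ler0n.
have hixi : forall i, hi i (p i).2 = i%:R.
  move=> i; have [_ [ei xi]] := hp i.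
  have : e i (p i).2 by [].
  rewrite {1}ei /= => nz.
  by rewrite /hi mulrCA mulfV ?mulr1 // normr_eq0.
have hic : forall i, continuous (hi i).
  move=> i x; rewrite /hi /continuous_at; apply: cvgMr_tmp. apply: (cvg_comp _ _ ((hp i).1 x)); exact: (@norm_continuous R R^o).
have bnd : forall x : X, exists2 U : set X, nbhs x U & exists m : nat,
    forall i, (m <= i)%nat -> forall y, U y -> hi i y = 0.
  move=> x; have [U Ux fin] := lf x; exists U => //.
  have : finite_set (e @^-1` [set A | w A /\ A `&` U !=set0]).
    apply: finite_preimage => // a b _ _; apply: einj; exact: in_setT.
  move=> /finite_nat_bounded [m hm]; exists m => i mi y Uy.
  have nm : ~ (e i `&` U !=set0).
    move=> ne; have := hm i (conj (eS i I).1 ne).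
    by rewrite ltnNge mi.
  have ny : ~ e i y by move=> eiy; apply: nm; exists y.
  have [_ [ei _]] := hp i.
  move: ny; rewrite ei /= => /negP; rewrite negbK => /eqP py.
  by rewrite /hi py normr0 mul0r.
have /choice[N hN] : forall x, exists N : nat, forall i, (N <= i)%nat -> hi i x = 0.
  move=> x; have [U Ux [m hm]] := bnd x; exists m => i mi.
  exact: hm i mi x (nbhs_singleton Ux).
pose h x := \sum_(i < N x) hi i x.
have hE : forall y M, (forall i, (M <= i)%nat -> hi i y = 0) -> h y = \sum_(i < M) hi i y.
  move=> y M hM; rewrite /h (@sum_widen (hi^~ y) (N y) (maxn (N y) M)) ?leq_maxl //; last exact: hN.
  by rewrite -(@sum_widen (hi^~ y) M (maxn (N y) M)) ?leq_maxr.
have hcont : continuous h.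
  move=> x; have [U Ux [m hm]] := bnd x.
  have Fc : continuous (fun y => \sum_(i < m) hi i y).
    clear hm; elim: m => [|k IH].
      under eq_fun do rewrite big_ord0; exact: cst_continuous.
    under eq_fun do rewrite big_ord_recr /=.
    move=> z; apply: (@cvgD _ R^o _ _ _ (fun y => \sum_(i < k) hi i y) (hi k)); [exact: IH | exact: hic].
  rewrite /continuous_at.
  have -> : h x = \sum_(i < m) hi i x.
    by apply: hE => i mi; apply: hm => //; exact: nbhs_singleton.
  have Fx := Fc x; apply: cvg_trans Fx; apply: near_eq_cvg.
  by apply: filterS Ux => y Uy; rewrite (hE y m) // => i mi; apply: hm.
have [M hM] := pc h hcont.
pose j := Num.bound `|M|.
have := hM (p j).2.
rewrite (hE _ (j.+1 + N (p j).2)); last by move=> i ji; apply: hN; apply: leq_trans ji; exact: leq_addl.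
rewrite big_split_ord /= big_ord_recr /= hixi.
set s1 := \sum_(i < j) _; set s2 := \sum_(i < N _) _.
have s10 : 0 <= s1 by apply: sumr_ge0 => i _.
have s20 : 0 <= s2 by apply: sumr_ge0 => i _.
rewrite ger0_norm; last by rewrite !addr_ge0 ?ler0n.
move=> le; have := archi_boundP (normr_ge0 M).
rewrite -/j => lt.
have : `|M| < M. apply: lt_le_trans lt _; apply: le_trans le; lra.
by rewrite ltNge ler_norm.
Qed.

Lemma fo_open {X : topologicalType} {U : set X} : functionally_open U -> open U.
Proof.
move=> [f [cf ->]].
have -> : [set x | f x != 0] = f @^-1` [set r : R | r != 0] by [].
apply: open_comp; first by move=> x _; exact: cf.
exact: (@open_neq R 0).
Qed.

Lemma finite_lf {X : topologicalType} {w : set (set X)} : finite_set w -> loc_finite w.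
Proof.
move=> fw x; exists setT; first exact: filterT.
by apply: sub_finite_set fw => A [].
Qed.

Theorem proposition2p1 (X : topologicalType) :
  tychonoff_space X -> pseudocompact X ->
  (C_space X <-> finite_C_space X).
Proof.
move=> _ pc; split.
- move=> CS w hw.
  have [g [hg [gcov [glf gfo]]]] := CS w (fun n =>
     conj (hw n).1 (conj (finite_lf (hw n).2.1) (hw n).2.2)).
  have FG := lf_finite pc glf gfo.
  have /choice[nA hnA] : forall A : set X, exists n : nat,
      [set A | (\bigcup_n g n) A /\ A !=set0] A -> g n A.
    move=> A; have [[[n _ gnA] _]|nF] := pselect ([set A | (\bigcup_n g n) A /\ A !=set0] A).
      by exists n.
    by exists 0%nat.
  have [k hk] := finite_nat_bounded _ (finite_image nA FG).
  exists k, (fun n => [set A | g n A /\ A !=set0]); split.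
  + move=> n nk; split; [|split; [|split]].
    * apply: sub_finite_set FG => A [gA nA0]; split => //; by exists n.
    * by move=> G H [gG _] [gH _]; apply: (hg n).1.
    * by move=> G [gG _]; apply: gfo; exists n.
    * by move=> G [gG _]; apply: (hg n).2.2.
  + move=> x; have [A [n _ gnA] Ax] := gcov x.
    have FA : [set A | (\bigcup_n g n) A /\ A !=set0] A.
      by split; [exists n | exists x].
    exists A => //; exists (nA A); last by split; [exact: hnA | exists x].
    by apply: hk; exists A.
- move=> FCS w hw.
  pose w' n := [set A | w n A /\ A !=set0].
  have hw' : forall n, covers (w' n) /\ finite_set (w' n) /\ all_functionally_open (w' n).
    move=> n; have [cov [lf fo]] := hw n; split; [|split].
    + by move=> x; have [A wA Ax] := cov x; exists A => //; split => //; exists x.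
    + exact: lf_finite.
    + by move=> A [wA _]; apply: fo.
  have [k [g [hg gcov]]] := FCS w' hw'.
  pose g' n := if (n < k)%nat then g n else set0.
  have sub : \bigcup_n g' n `<=` \bigcup_(n in [set n : nat | (n < k)%nat]) g n.
    move=> A [n _]; rewrite /g'; case: ifPn => nk // gA; by exists n.
  have fin : finite_set (\bigcup_(n in [set n : nat | (n < k)%nat]) g n).
    apply: bigcup_finite; first exact: (finite_II k).
    by move=> n nk; exact: (hg n nk).1.
  exists g'; split; [|split; [|split]].
  + move=> n; rewrite /g'; case: ifPn => nk; last first.
      by split; [move=> ? ? [] | split; move=> ? []].
    have [_ [dj [fo rf]]] := hg n nk; split => //; split.
    * by move=> G gG; apply: fo_open; apply: fo.
    * by move=> G gG; have [W [wW _] GW] := rf G gG; exists W.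
  + move=> x; have [A [n nk gA] Ax] := gcov x; exists A => //.
    by exists n => //; rewrite /g' ifT.
  + apply: finite_lf; exact: sub_finite_set sub fin.
  + move=> A /sub [n nk gA]; exact: (hg n nk).2.2.1.
Qed.
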